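(* Consider the FedAvg round $t$ with coordinate-wise chip-diverse REED transmission (defined in the context) with deterministic weights $c_1,\dots,c_M\ge0$, $C_M=\sum_m c_m>0$, and assume $\|g_{k,q}^t\|\le G$ almost surely for all $k,q,t$. Suppose each client $k$ is subject to the per-round average energy constraint $$\frac1d\sum_{j=1}^d\sum_{m=1}^M\left(|a_{k,j,m,+}^t|^2+|a_{k,j,m,-}^t|^2\right)\le E_k,$$ with $E_k>0$. Then the deterministic choice $$\eta=\min_{k\in\{1,\dots,K\}}\frac{E_kK\sqrt d\,\mu_k^2}{C_M\beta QG}$$ satisfies all client energy constraints. Hence, for fixed system parameters ($K,d,Q,G,\sigma_z^2,\{E_k\},\{\mu_k\}$) and fixed chip weights, $\eta=\Theta(1/\beta)$, and both quantities $$\sigma_{\mathrm{air}}^2=(\beta QG)^2+\frac{2\sigma_z^2\sqrt d}{\eta}(\beta QG)+\frac{2d\sigma_z^4}{\eta^2}$$ (for $M=1$, $c_1=1$) and $$\sigma_{\mathrm{air}}^2=\frac{\sum_{m}c_m^2}{C_M^2}(\beta QG)^2+\frac{2\sigma_z^2\sqrt d}{\eta C_M}(\beta QG)+\frac{2dM\sigma_z^4}{\eta^2C_M^2}$$ satisfy $\sigma_{\mathrm{air}}^2=O(\beta^2)$ as $\beta\to0$.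
   Context: FedAvg setup: $K$ clients, model dimension $d$; at round $t$ each client starts from the global model $w^t$ and runs $Q$ local steps $w_{k,q+1}^t=w_{k,q}^t-\beta g_{k,q}^t$ with stepsize $\beta>0$ and stochastic gradients $g_{k,q}^t$; the local increment is $\Delta_k^t=-\beta\sum_{q=0}^{Q-1}g_{k,q}^t$. Coordinate-wise REED transmission: with $\eta>0$, average channel powers $\mu_k^2>0$, and $u_{k,j}^t=\frac1K[\Delta_k^t]_j$, client $k$ transmits on coordinate $j$, chip $m\in\{1,\dots,M\}$, branch $\pm$ the symbol $a_{k,j,m,\pm}^t=\frac{\sqrt{\eta c_m[u_{k,j}^t]_\pm}}{\mu_k}e^{\mathrm{i}\phi_{k,j,m,\pm}^t}$, where $[x]_+=\max\{x,0\}$, $[x]_-=\max\{-x,0\}$ and $\phi$ are phases. $\sigma_z^2>0$ is the receiver noise variance. *)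

(* Defs.v *)
From HB Require Import structures.
From mathcomp Require Import all_boot all_order all_algebra.
From mathcomp Require Import all_classical all_reals all_analysis.
Set Implicit Arguments. Unset Strict Implicit. Unset Printing Implicit Defensive.
Import Order.TTheory GRing.Theory Num.Theory.
Local Open Scope ring_scope.

Section REED.
Variable R : realType.

Definition posp (x : R) : R := Num.max x 0.
Definition negp (x : R) : R := Num.max (- x) 0.

Definition enorm (d : nat) (v : 'rV[R]_d) : R := Num.sqrt (\sum_(j < d) v ord0 j ^+ 2).

(* minimum of f over 'I_K (equals 0 by convention when K = 0) *)
Definition min_over (K : nat) (f : 'I_K -> R) : R :=
  match [seq f k | k <- enum 'I_K] with
  | [::] => 0
  | x :: s => foldr Num.min x s
  end.

Definition local_incr (K Q d : nat) (beta : R) (g : 'I_K -> 'I_Q -> 'rV[R]_d)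
  (k : 'I_K) : 'rV[R]_d := - (beta *: \sum_(q < Q) g k q).

Definition uval (K Q d : nat) (beta : R) (g : 'I_K -> 'I_Q -> 'rV[R]_d)
  (k : 'I_K) (j : 'I_d) : R := (local_incr beta g k) ord0 j / K%:R.

(* The complex REED symbol a = sqrt(eta c [u]_pm)/mu * e^{i phi},
   represented by its real and imaginary parts. *)
Definition reed_symbol (eta c mu x phi : R) : R * R :=
  (Num.sqrt (eta * c * x) / mu * cos phi, Num.sqrt (eta * c * x) / mu * sin phi).

Definition cmod2 (z : R * R) : R := z.1 ^+ 2 + z.2 ^+ 2.

Definition client_energy (K Q d M : nat) (eta beta : R) (c : 'I_M -> R)
  (mu : 'I_K -> R) (g : 'I_K -> 'I_Q -> 'rV[R]_d)
  (phip phim : 'I_K -> 'I_d -> 'I_M -> R) (k : 'I_K) : R :=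
  d%:R^-1 * \sum_(j < d) \sum_(m < M)
    (cmod2 (reed_symbol eta (c m) (mu k) (posp (uval beta g k j)) (phip k j m)) +
     cmod2 (reed_symbol eta (c m) (mu k) (negp (uval beta g k j)) (phim k j m))).

Definition eta_choice (K d Q : nat) (G CM beta : R) (E mu : 'I_K -> R) : R :=
  min_over (fun k => E k * K%:R * Num.sqrt d%:R * mu k ^+ 2 / (CM * beta * Q%:R * G)).

Definition sigma_air1 (d Q : nat) (G sz2 eta beta : R) : R :=
  (beta * Q%:R * G) ^+ 2 + 2 * sz2 * Num.sqrt d%:R / eta * (beta * Q%:R * G)
  + 2 * d%:R * sz2 ^+ 2 / eta ^+ 2.

Definition sigma_airM (d Q M : nat) (c : 'I_M -> R) (G sz2 eta beta : R) : R :=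
  let CM := \sum_(m < M) c m in
  (\sum_(m < M) c m ^+ 2) / CM ^+ 2 * (beta * Q%:R * G) ^+ 2
  + 2 * sz2 * Num.sqrt d%:R / (eta * CM) * (beta * Q%:R * G)
  + 2 * d%:R * M%:R * sz2 ^+ 2 / (eta ^+ 2 * CM ^+ 2).

End REED.

(* The filter "beta -> 0+" (right neighbourhoods of 0) packaged as a
   filter_on R, so that it can be used with the Landau notations. *)
Definition at_right0 (R : realType) : filter_on R :=
  FilterType (at_right (0 : R)) (at_right_proper_filter (0 : R)).

(* Main.v *)
Require Import Defs.
From HB Require Import structures.
From mathcomp Require Import all_boot all_order all_algebra.
From mathcomp Require Import all_classical all_reals all_analysis.
From mathcomp Require Import ring lra.
Import Order.TTheory GRing.Theory Num.Theory.
Local Open Scope classical_set_scope.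
Local Open Scope ring_scope.

Section Helpers.
Variable R : realType.

Lemma foldr_min_mem (x : R) s : foldr Num.min x s \in x :: s.
Proof.
elim: s => [|y s IH] /=; first by rewrite mem_seq1.
case: leP => _; first by rewrite !inE eqxx orbT.
move: IH; rewrite !inE => /orP[->|->] //; by rewrite !orbT.
Qed.

Lemma foldr_min_le (x : R) s y : y \in x :: s -> foldr Num.min x s <= y.
Proof.
elim: s y => [|z s IH] y /=; first by rewrite mem_seq1 => /eqP ->.
rewrite !inE => H; rewrite ge_min.
case/orP: H => [Hy|/orP[Hy|Hy]].
- by rewrite IH ?orbT // inE Hy.
- by rewrite (eqP Hy) lexx.
- by rewrite IH ?orbT // inE Hy orbT.
Qed.

Lemma min_overP K (f : 'I_K -> R) : (0 < K)%N ->
  (exists k, min_over f = f k) /\ forall k, min_over f <= f k.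
Proof.
move=> HK; rewrite /min_over.
have Hin : forall k, f k \in [seq f k | k <- enum 'I_K].
  by move=> k; apply: map_f; rewrite mem_enum.
have Hpre : forall y, y \in [seq f k | k <- enum 'I_K] -> exists k, y = f k.
  by move=> y /mapP[k _ ->]; exists k.
move: Hin Hpre.
case: [seq f k | k <- enum 'I_K] => [/(_ (Ordinal HK))//|x s Hin Hpre].
split; last by move=> k; apply: foldr_min_le.
exact: Hpre (foldr_min_mem x s).
Qed.

Lemma eta_bounds K d Q (G CM : R) (E mu : 'I_K -> R) :
  (0 < K)%N -> (0 < d)%N -> (0 < Q)%N -> 0 < G -> 0 < CM ->
  (forall k, 0 < E k) -> (forall k, 0 < mu k) ->
  exists m, exists M', 0 < m /\ 0 < M' /\ forall beta, 0 < beta ->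
    m / beta <= eta_choice d Q G CM beta E mu <= M' / beta.
Proof.
move=> HK Hd HQ HG HCM HE Hmu.
pose A k := E k * K%:R * Num.sqrt d%:R * mu k ^+ 2 / (CM * Q%:R * G).
have HA : forall k, 0 < A k.
  move=> k; rewrite /A; apply: divr_gt0; last by rewrite !mulr_gt0 ?ltr0n.
  by rewrite !mulr_gt0 ?ltr0n ?sqrtr_gt0 ?ltr0n ?exprn_gt0.
have [[k0 Hk0] Hle] := @min_overP _ A HK.
exists (min_over A), (A (Ordinal HK)); split; first by rewrite Hk0.
split=> // beta Hb.
have -> : eta_choice d Q G CM beta E mu = min_over (fun k => A k / beta).
  rewrite /eta_choice; congr min_over; apply: funext => k; rewrite /A.
  field; by rewrite !gt_eqF ?ltr0n.
have [[k1 ->] Hle'] := @min_overP _ (fun k => A k / beta) HK.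
apply/andP; split.
  by rewrite ler_pM2r ?invr_gt0.
by have := Hle' (Ordinal HK).
Qed.

Lemma cmod2_reed (eta c mu x phi : R) : 0 <= eta * c * x -> 0 < mu ->
 cmod2 (reed_symbol eta c mu x phi) = eta * c * x / mu ^+ 2.
Proof.
move=> H Hmu; rewrite /cmod2 /reed_symbol /= !exprMn -mulrDr cos2Dsin2 mulr1.
by rewrite sqr_sqrtr // exprVn.
Qed.

Lemma posp_negp (x : R) : posp x + negp x = `|x|.
Proof.
rewrite /posp /negp; case: (lerP x 0) => h1; case: (lerP (- x) 0) => h2;
  case: (ger0P x) => h3; lra.
Qed.

Lemma posp_ge0 (x : R) : 0 <= posp x.
Proof. by rewrite /posp; case: (lerP x 0) => h //; apply: ltW. Qed.
Lemma negp_ge0 (x : R) : 0 <= negp x.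
Proof. by rewrite /negp; case: (lerP (- x) 0) => h //; apply: ltW. Qed.

Lemma cs_abs d (v : 'rV[R]_d) :
  \sum_(j < d) `|v ord0 j| <= Num.sqrt d%:R * enorm v.
Proof.
rewrite /enorm -sqrtrM ?ler0n //.
have H0 : 0 <= \sum_(j < d) `|v ord0 j| by apply: sumr_ge0 => j _.
rewrite -(ger0_norm H0) -sqrtr_sqr; apply: ler_wsqrtr.
rewrite expr2 mulr_suml.
apply: (@le_trans _ _ (\sum_(i < d) \sum_(j < d)
   ((v ord0 i ^+ 2 + v ord0 j ^+ 2) / 2))).
  apply: ler_sum => i _; rewrite mulr_sumr; apply: ler_sum => j _.
  rewrite ler_pdivlMr // -(real_normK (num_real (v ord0 i))) -(real_normK (num_real (v ord0 j))).
  set a := `|v ord0 i|; set b := `|v ord0 j|.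
  have : 0 <= (a - b) ^+ 2 by rewrite sqr_ge0.
  lra.
under eq_bigr do rewrite -mulr_suml big_split /= sumr_const card_ord.
rewrite -mulr_suml big_split /= sumr_const card_ord.
rewrite -mulr_natr.
have -> : \sum_(i < d) (v ord0 i ^+ 2 *+ d) = (\sum_(i < d) v ord0 i ^+ 2) * d%:R.
  by rewrite mulr_suml; apply: eq_bigr => i _; rewrite mulr_natr.
set S := \sum_(i < d) v ord0 i ^+ 2.
by rewrite le_eqVlt; apply/orP; left; apply/eqP; field.
Qed.

Lemma energy_ok K Q d M (G E eta beta : R) (c : 'I_M -> R) (mu : 'I_K -> R)
  (g : 'I_K -> 'I_Q -> 'rV[R]_d) (phip phim : 'I_K -> 'I_d -> 'I_M -> R)
  (k : 'I_K) :
  (0 < K)%N -> (0 < d)%N -> (0 < Q)%N -> 0 < G -> 0 < beta -> 0 <= eta ->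
  (forall m, 0 <= c m) -> 0 < \sum_(m < M) c m -> 0 < mu k ->
  (forall q, enorm (g k q) <= G) ->
  eta <= E * K%:R * Num.sqrt d%:R * mu k ^+ 2 / ((\sum_(m < M) c m) * beta * Q%:R * G) ->
  client_energy eta beta c mu g phip phim k <= E.
Proof.
move=> HK Hd HQ HG Hb He Hc HCM Hmu Hg Heta.
set CM := \sum_(m < M) c m in HCM Heta.
have Hmu0 : mu k != 0 by rewrite gt_eqF.
have Hj : forall j, \sum_(m < M)
    (cmod2 (reed_symbol eta (c m) (mu k) (posp (uval beta g k j)) (phip k j m)) +
     cmod2 (reed_symbol eta (c m) (mu k) (negp (uval beta g k j)) (phim k j m)))
   = eta * CM * `|uval beta g k j| / mu k ^+ 2.
  move=> j.
  transitivity (\sum_(m < M) c m * (eta * (posp (uval beta g k j) + negp (uval beta g k j)) / mu k ^+ 2)).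
    apply: eq_bigr => m _.
    rewrite !cmod2_reed ?mulr_ge0 ?posp_ge0 ?negp_ge0 //.
    by field.
  rewrite -mulr_suml posp_negp /CM; by field.
rewrite /client_energy (eq_bigr _ (fun j _ => Hj j)).
clearbody CM.
have Hu : forall j, `|uval beta g k j| = beta / K%:R * `|\sum_(q < Q) g k q ord0 j|.
  move=> j; rewrite /uval /local_incr !mxE summxE normrM normrN normrM normfV.
  by rewrite (ger0_norm (ltW Hb)) normr_nat mulrAC.
under eq_bigr do rewrite Hu.
set T := \sum_(j < d) `|\sum_(q < Q) g k q ord0 j|.
have HT : T <= Q%:R * (Num.sqrt d%:R * G).
  apply: (@le_trans _ _ (\sum_(j < d) \sum_(q < Q) `|g k q ord0 j|)).
    by apply: ler_sum => j _; apply: ler_norm_sum.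
  rewrite exchange_big /=.
  apply: (@le_trans _ _ (\sum_(q < Q) (Num.sqrt d%:R * G))).
    apply: ler_sum => q _; apply: (le_trans (cs_abs _ (g k q))).
    by apply: ler_wpM2l; [apply: sqrtr_ge0 | apply: Hg].
  by rewrite sumr_const card_ord mulr_natl.
have -> : \sum_(j < d) (eta * CM * (beta / K%:R * `|\sum_(q < Q) g k q ord0 j|) / mu k ^+ 2)
   = eta * CM * beta / (K%:R * mu k ^+ 2) * T.
  rewrite /T mulr_sumr; apply: eq_bigr => j _; field.
  by rewrite Hmu0 pnatr_eq0 -lt0n HK.
have HP : 0 <= eta * CM * beta / (K%:R * mu k ^+ 2).
  by apply: divr_ge0; [rewrite !mulr_ge0 // ltW | rewrite mulr_ge0 ?ler0n ?exprn_ge0 // ltW].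
apply: (@le_trans _ _ (d%:R^-1 * (eta * CM * beta / (K%:R * mu k ^+ 2) * (Q%:R * (Num.sqrt d%:R * G))))).
  by rewrite ler_wpM2l ?invr_ge0 ?ler0n // ler_wpM2l.
set s := Num.sqrt d%:R.
have Hs : s ^+ 2 = d%:R by rewrite sqr_sqrtr ?ler0n.
have Hs0 : 0 < s by rewrite sqrtr_gt0 ltr0n.
have -> : d%:R^-1 * (eta * CM * beta / (K%:R * mu k ^+ 2) * (Q%:R * (s * G)))
   = eta * (CM * beta * Q%:R * G / (s * K%:R * mu k ^+ 2)).
  rewrite -Hs; field.
  by rewrite Hmu0 pnatr_eq0 -lt0n HK gt_eqF.
have HP2 : 0 <= CM * beta * Q%:R * G / (s * K%:R * mu k ^+ 2).
  by apply: divr_ge0; [rewrite !mulr_ge0 ?ler0n // ltW | rewrite !mulr_ge0 ?ler0n ?exprn_ge0 // ltW].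
apply: (le_trans (ler_wpM2r HP2 Heta)).
rewrite -/s.
have -> : E * K%:R * s * mu k ^+ 2 / (CM * beta * Q%:R * G) *
  (CM * beta * Q%:R * G / (s * K%:R * mu k ^+ 2)) = E.
  field.
  by rewrite Hmu0 !pnatr_eq0 -!lt0n HK HQ !gt_eqF.
by [].
Qed.

Lemma pos_near : \forall x \near (at_right0 R), 0 < x.
Proof. exact: nbhs_right_gt. Qed.

Lemma bigO_sq (f eta : R -> R) (a b c m : R) :
  0 < m -> 0 <= a -> 0 <= b -> 0 <= c ->
  (forall x, 0 < x -> m / x <= eta x) ->
  (forall x, 0 < x -> f x = a * x ^+ 2 + b / eta x * x + c / eta x ^+ 2) ->
  f =O_ (at_right0 R) (fun x => x ^+ 2).
Proof.
move=> Hm Ha Hb Hc Heta Hf.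
have Hm0 : 0 <= m := ltW Hm.
apply/eqO_exP; exists (a + b / m + c / m ^+ 2 + 1).
  by rewrite ltr_pwDr // !addr_ge0 // divr_ge0 // exprn_ge0.
apply: filterS pos_near => x hx.
have He : 0 < eta x by apply: lt_le_trans (Heta x hx); rewrite divr_gt0.
set i := (eta x)^-1.
have Hi0 : 0 <= i by rewrite invr_ge0 ltW.
have Hi : i <= x / m.
  rewrite /i -(invf_div m x) lef_pV2 ?Heta // posrE ?divr_gt0 //.
have Hx0 : 0 <= x := ltW hx.
have He0 : 0 <= eta x := ltW He.
rewrite Hf // ger0_norm; last first.
  by rewrite !addr_ge0 ?mulr_ge0 ?invr_ge0 ?exprn_ge0.
rewrite ger0_norm ?exprn_ge0 //.
have -> : b / eta x * x = b * i * x by [].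
have -> : c / eta x ^+ 2 = c * i ^+ 2 by rewrite /i exprVn.
apply: (@le_trans _ _ (a * x ^+ 2 + b * (x / m) * x + c * (x / m) ^+ 2)).
  apply: lerD; first apply: lerD => //.
  - by apply: ler_wpM2r => //; apply: ler_wpM2l.
  - by apply: ler_wpM2l => //; apply: lerXn2r; rewrite ?nnegrE ?divr_ge0.
rewrite (_ : (a + b / m + c / m ^+ 2 + 1) * x ^+ 2 =
   a * x ^+ 2 + b * (x / m) * x + c * (x / m) ^+ 2 + x ^+ 2); last first.
  by field; rewrite gt_eqF.
by rewrite lerDl exprn_ge0.
Qed.

End Helpers.

Theorem lemma2 (R : realType) (K d Q M : nat) (G sz2 : R)
  (E mu : 'I_K -> R) (c : 'I_M -> R) :
  (0 < K)%N -> (0 < d)%N -> (0 < Q)%N -> (0 < M)%N ->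
  0 < G -> 0 < sz2 ->
  (forall k, 0 < E k) -> (forall k, 0 < mu k) ->
  (forall m, 0 <= c m) -> 0 < \sum_(m < M) c m ->
  (* (i) the choice of eta satisfies every client's energy constraint *)
  (forall (beta : R), 0 < beta ->
   forall (g : 'I_K -> 'I_Q -> 'rV[R]_d),
   (forall k q, enorm (g k q) <= G) ->
   forall (phip phim : 'I_K -> 'I_d -> 'I_M -> R) (k : 'I_K),
   client_energy (eta_choice d Q G (\sum_(m < M) c m) beta E mu) beta c mu g
     phip phim k <= E k)
  /\
  (* (ii) eta = Theta(1/beta) as beta -> 0+ *)
  (fun beta : R => eta_choice d Q G (\sum_(m < M) c m) beta E mu)
    =Theta_ (at_right0 R) (fun beta : R => beta^-1)
  /\
  (* (iii) sigma_air^2 = O(beta^2) as beta -> 0+, for M = 1, c_1 = 1 *)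
  (fun beta : R => sigma_air1 d Q G sz2 (eta_choice d Q G 1 beta E mu) beta)
    =O_ (at_right0 R) (fun beta : R => beta ^+ 2)
  /\
  (* (iv) and for the general chip weights *)
  (fun beta : R =>
     sigma_airM d Q c G sz2 (eta_choice d Q G (\sum_(m < M) c m) beta E mu) beta)
    =O_ (at_right0 R) (fun beta : R => beta ^+ 2).
Proof.
move=> HK Hd HQ HM HG Hsz HE Hmu Hc HCM.
have [m [M' [Hm [HM' Hb]]]] := @eta_bounds R K d Q G (\sum_(m < M) c m) E mu HK Hd HQ HG HCM HE Hmu.
have [m1 [M1 [Hm1 [HM1 Hb1]]]] := @eta_bounds R K d Q G 1 E mu HK Hd HQ HG ltr01 HE Hmu.
split.
  move=> beta hb g Hg phip phim k.
  have /andP[Hl _] := Hb beta hb.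
  apply: (@energy_ok R K Q d M G (E k) _ beta c mu g phip phim k) => //.
  - by apply: le_trans _ Hl; rewrite divr_ge0 // ltW.
  - rewrite /eta_choice.
    have [_ H] := @min_overP R K (fun k => E k * K%:R * Num.sqrt d%:R * mu k ^+ 2 /
          ((\sum_(m < M) c m) * beta * Q%:R * G)) HK.
    exact: H k.
split.
  rewrite eqThetaE qualifE; apply/asboolP; exists (m, M') => /=.
    by rewrite Hm HM'.
  apply: filterS (@pos_near R) => x hx /=.
  have /andP[Hl Hr] := Hb x hx.
  have He : 0 < eta_choice d Q G (\sum_(m < M) c m) x E mu.
    by apply: lt_le_trans Hl; rewrite divr_gt0.
  have Hx : 0 <= x^-1 by rewrite invr_ge0 ltW.
  by rewrite (ger0_norm (ltW He)) (ger0_norm Hx); split.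
split.
  apply: (@bigO_sq R _ (fun x => eta_choice d Q G 1 x E mu)
     ((Q%:R * G) ^+ 2) (2 * sz2 * Num.sqrt d%:R * (Q%:R * G)) (2 * d%:R * sz2 ^+ 2) m1).
  - exact: Hm1.
  - exact: sqr_ge0.
  - by rewrite !mulr_ge0 ?sqrtr_ge0 ?ler0n // ltW.
  - by rewrite !mulr_ge0 ?exprn_ge0 ?ler0n // ltW.
  - by move=> x hx; have /andP[] := Hb1 x hx.
  - move=> x hx; rewrite /sigma_air1.
    have /andP[Hl _] := Hb1 x hx.
    have He : 0 < eta_choice d Q G 1 x E mu.
      by apply: lt_le_trans Hl; rewrite divr_gt0.
    by field; rewrite gt_eqF.
apply: (@bigO_sq R _ (fun x => eta_choice d Q G (\sum_(m < M) c m) x E mu)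
   ((\sum_(m < M) c m ^+ 2) / (\sum_(m < M) c m) ^+ 2 * (Q%:R * G) ^+ 2)
   (2 * sz2 * Num.sqrt d%:R / (\sum_(m < M) c m) * (Q%:R * G))
   (2 * d%:R * M%:R * sz2 ^+ 2 / (\sum_(m < M) c m) ^+ 2) m).
- exact: Hm.
- rewrite mulr_ge0 ?sqr_ge0 // divr_ge0 ?sqr_ge0 //.
  by apply: sumr_ge0 => i _; rewrite sqr_ge0.
- by rewrite !mulr_ge0 ?invr_ge0 ?sqrtr_ge0 ?ler0n // ltW.
- by rewrite !mulr_ge0 ?invr_ge0 ?exprn_ge0 ?ler0n // ltW.
- by move=> x hx; have /andP[] := Hb x hx.
- move=> x hx; rewrite /sigma_airM.
  have /andP[Hl _] := Hb x hx.
  have He : 0 < eta_choice d Q G (\sum_(m < M) c m) x E mu.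
    by apply: lt_le_trans Hl; rewrite divr_gt0.
  by field; rewrite !gt_eqF.
Qed.
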